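(* Let $r,c\ge1$, $n=r+c$, $X_1,X_2$ as below, and $1\le K\le 2^{\min(r,c)}$. For every quantum algorithm $\mathcal A$ making $T$ queries to $\varphi$ and $\varphi^{-1}$, if for every permutation $\varphi$ of $\{0,1\}^n$ with exactly $K$ $X$-pairs $\mathcal A$ outputs an $X$-pair $(x,y)\in X_1\times X_2$ with $\varphi(x)=y$ with probability at least $\epsilon>0$, then $$\epsilon\le\frac{8(T+1)^2K}{2^{\min(r,c)}}.$$
   Context: $X_1\subset\{0,1\}^n$ is the set of strings ending in $0^c$, $X_2\subset\{0,1\}^n$ the set of strings beginning with $0^r$; an $X$-pair of $\varphi$ is $(x,y)\in X_1\times X_2$ with $\varphi(x)=y$. Queries are to the unitaries $O_\varphi:|a\rangle|b\rangle\mapsto|a\rangle|b\oplus\varphi(a)\rangle$ and $O_{\varphi^{-1}}:|a\rangle|b\rangle\mapsto|a\rangle|b\oplus\varphi^{-1}(a)\rangle$; success probability is over the algorithm's randomness and measurements. *)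

(* Defs.v *)
From HB Require Import structures.
From mathcomp Require Import all_boot all_order all_algebra all_fingroup.
From mathcomp Require Import complex.
From mathcomp Require Import reals.
Set Implicit Arguments. Unset Strict Implicit. Unset Printing Implicit Defensive.
Import Order.TTheory GRing.Theory Num.Theory.
Local Open Scope ring_scope.

(* n-bit strings; bit 0 is the first (leftmost) bit. *)
Definition bits (n : nat) := {ffun 'I_n -> bool}.

Definition bxor n (a b : bits n) : bits n := [ffun i => a i (+) b i].

(* X_1: strings of length r+c ending in 0^c ; X_2: strings beginning with 0^r *)
Definition inX1 (r c : nat) (x : bits (r + c)) : bool :=
  [forall i : 'I_(r + c), (r <= i)%N ==> ~~ x i].
Definition inX2 (r c : nat) (y : bits (r + c)) : bool :=
  [forall i : 'I_(r + c), (i < r)%N ==> ~~ y i].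

Definition Xpair r c (phi : {perm bits (r + c)}) (p : bits (r + c) * bits (r + c)) : bool :=
  [&& @inX1 r c p.1, @inX2 r c p.2 & phi p.1 == p.2].

Definition num_Xpairs r c (phi : {perm bits (r + c)}) : nat :=
  #|[set x : bits (r + c) | @inX1 r c x && @inX2 r c (phi x)]|.

(* Quantum state space: query input register, query output register, workspace W.
   States are amplitude vectors S -> R[i]; operators are kernels S -> S -> R[i]. *)
Definition qspace n (W : finType) := (bits n * bits n * W)%type.

Definition apply_op (R : rcfType) (S : finType) (U : S -> S -> R[i]) (v : S -> R[i]) : S -> R[i] :=
  fun s => \sum_(t : S) U s t * v t.

Definition op_unitary (R : rcfType) (S : finType) (U : S -> S -> R[i]) : Prop :=
  forall s t : S, \sum_(k : S) (U k s)^* * U k t = (s == t)%:R.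

(* Oracle O_f : |a>|b>|w> |-> |a>|b xor f(a)>|w>  (an involution, so this is its action
   on amplitude vectors). *)
Definition oracle (R : rcfType) n (W : finType) (f : bits n -> bits n)
  (v : qspace n W -> R[i]) : qspace n W -> R[i] :=
  fun s => v (s.1.1, bxor s.1.2 (f s.1.1), s.2).

Definition basis_vec (R : rcfType) (S : finType) (s0 : S) : S -> R[i] :=
  fun s => (s == s0)%:R.

(* State after the initial unitary U 0 and k queries: the j-th query (j = 0..k-1) is to
   phi if dir j, to phi^-1 otherwise, and is followed by the unitary U (j+1). *)
Fixpoint qstate (R : rcfType) n (W : finType) (phi : {perm bits n})
  (s0 : qspace n W) (U : nat -> qspace n W -> qspace n W -> R[i]) (dir : nat -> bool)
  (k : nat) : qspace n W -> R[i] :=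
  match k with
  | 0 => apply_op (U 0%N) (basis_vec R s0)
  | k'.+1 => apply_op (U k)
      (oracle (if dir k' then (phi : bits n -> bits n) else (phi^-1)%g) (qstate phi s0 U dir k'))
  end.

(* Success probability: measure all registers in the computational basis after T queries
   and output out(s); success iff the output is an X-pair of phi. *)
Definition success_prob (R : rcfType) r c (W : finType) (phi : {perm bits (r + c)})
  (s0 : qspace (r + c) W) (U : nat -> qspace (r + c) W -> qspace (r + c) W -> R[i])
  (dir : nat -> bool) (out : qspace (r + c) W -> bits (r + c) * bits (r + c)) (T : nat) : R[i] :=
  \sum_(s : qspace (r + c) W | Xpair phi (out s)) `|qstate phi s0 U dir T s| ^+ 2.

(* Main.v *)
Require Import Defs.
From HB Require Import structures.
From mathcomp Require Import all_boot all_order all_algebra all_fingroup.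
From mathcomp Require Import complex.
From mathcomp Require Import reals.
From mathcomp Require Import ring lra zify.
Import Order.TTheory GRing.Theory Num.Theory.
Local Open Scope ring_scope.

Set Implicit Arguments. Unset Strict Implicit. Unset Printing Implicit Defensive.

Section RealL2.
Variable R : realType.
Implicit Types a b : R.

Lemma CS (I : finType) (x y : I -> R) :
  (\sum_i x i * y i) ^+ 2 <= (\sum_i x i ^+ 2) * (\sum_i y i ^+ 2).
Proof.
have E : \sum_i \sum_j (x i * y j - x j * y i) ^+ 2 =
   2 * ((\sum_i x i ^+ 2) * (\sum_i y i ^+ 2) - (\sum_i x i * y i) ^+ 2).
  have e1 : forall i j, (x i * y j - x j * y i) ^+ 2 =
     x i ^+ 2 * y j ^+ 2 + y i ^+ 2 * x j ^+ 2 - 2 * (x i * y i) * (x j * y j).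
    by move=> i j; ring.
  under eq_bigr do under eq_bigr do rewrite e1.
  under eq_bigr do rewrite sumrB big_split /= -!mulr_sumr.
  set A := \sum_i x i ^+ 2; set B := \sum_i y i ^+ 2; set C := \sum_i x i * y i.
  rewrite sumrB big_split /= -!mulr_suml -/A -/B -/C -mulr_sumr -/C; ring.
have : 0 <= \sum_i \sum_j (x i * y j - x j * y i) ^+ 2.
  by apply: sumr_ge0 => i _; apply: sumr_ge0 => j _; apply: sqr_ge0.
rewrite E; lra.
Qed.

Definition L2 (I : finType) (f : I -> R) := Num.sqrt (\sum_i f i ^+ 2).

Lemma L2_ge0 (I : finType) (f : I -> R) : 0 <= L2 f.
Proof. exact: sqrtr_ge0. Qed.

Lemma sumsq_ge0 (I : finType) (f : I -> R) : 0 <= \sum_i f i ^+ 2.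
Proof. by apply: sumr_ge0 => i _; apply: sqr_ge0. Qed.

Lemma L2_sqr (I : finType) (f : I -> R) : L2 f ^+ 2 = \sum_i f i ^+ 2.
Proof. by rewrite sqr_sqrtr // sumsq_ge0. Qed.

Lemma le_sqrt_sum a b c : 0 <= a -> 0 <= b -> c <= (Num.sqrt a + Num.sqrt b) ^+ 2 ->
  Num.sqrt c <= Num.sqrt a + Num.sqrt b.
Proof.
move=> a0 b0 h.
have s0 : 0 <= Num.sqrt a + Num.sqrt b by rewrite addr_ge0 ?sqrtr_ge0.
rewrite -[X in _ <= X]ger0_norm // -sqrtr_sqr.
by rewrite ler_sqrt // sqr_ge0.
Qed.

Lemma minkowski (I : finType) (f g : I -> R) :
  L2 (fun i => f i + g i) <= L2 f + L2 g.
Proof.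
apply: le_sqrt_sum; rewrite ?sumsq_ge0 //.
have h := CS f g.
set A := \sum_i f i ^+ 2 in h *; set B := \sum_i g i ^+ 2 in h *.
set C := \sum_i f i * g i in h *.
have -> : \sum_i (f i + g i) ^+ 2 = A + B + 2 * C.
  rewrite /A /B /C mulr_sumr -!big_split /=; apply: eq_bigr => i _; ring.
have A0 : 0 <= A by apply: sumsq_ge0.
have B0 : 0 <= B by apply: sumsq_ge0.
have C2 : C <= Num.sqrt A * Num.sqrt B.
  rewrite -sqrtrM //; apply: le_trans (ler_norm C) _.
  by rewrite -sqrtr_sqr ler_wsqrtr.
have sa := sqr_sqrtr A0; have sb := sqr_sqrtr B0.
nra.
Qed.

Lemma sum_sqrt_le (I : finType) (q : I -> R) : (forall i, 0 <= q i) ->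
  \sum_i Num.sqrt (q i) <= Num.sqrt (#|I|%:R) * Num.sqrt (\sum_i q i).
Proof.
move=> q0.
have h := CS (fun _ => 1) (fun i => Num.sqrt (q i)).
rewrite -sqrtrM ?ler0n //.
have s0 : 0 <= \sum_i Num.sqrt (q i) by apply: sumr_ge0 => i _; apply: sqrtr_ge0.
rewrite -[X in X <= _]ger0_norm // -sqrtr_sqr ler_wsqrtr //.
move: h; under eq_bigr do rewrite mul1r.
under [\sum_i 1 ^+ 2]eq_bigr do rewrite expr1n.
under [\sum_i Num.sqrt _ ^+ 2]eq_bigr do rewrite sqr_sqrtr //.
by rewrite sumr_const.
Qed.
End RealL2.

Section Cvec.
Variable R : realType.
Variable S : finType.
Implicit Types u v w : S -> R[i].

Definition nrm2 (z : R[i]) : R := complex.Re z ^+ 2 + complex.Im z ^+ 2.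
Definition Qv v : R := \sum_s nrm2 (v s).
Definition Nv v : R := Num.sqrt (Qv v).
Definition proj (P : pred S) v : S -> R[i] := fun s => if P s then v s else 0.

Lemma nrm2_ge0 z : 0 <= nrm2 z.
Proof. by rewrite addr_ge0 ?sqr_ge0. Qed.
Lemma nrm2C z : (nrm2 z)%:C%C = `|z| ^+ 2.
Proof. exact: add_Re2_Im2. Qed.
Lemma nrm2_0 : nrm2 0 = 0.
Proof. by rewrite /nrm2 /= expr0n /= addr0. Qed.
Lemma nrm2_1 : nrm2 1 = 1.
Proof. by rewrite /nrm2 /= expr0n /= expr1n addr0. Qed.
Lemma nrm2N z : nrm2 (- z) = nrm2 z.
Proof. by case: z => a b; rewrite /nrm2 /= !sqrrN. Qed.

Lemma Qv_ge0 v : 0 <= Qv v.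
Proof. by apply: sumr_ge0 => s _; apply: nrm2_ge0. Qed.
Lemma Nv_ge0 v : 0 <= Nv v.
Proof. exact: sqrtr_ge0. Qed.
Lemma Nv_sqr v : Nv v ^+ 2 = Qv v.
Proof. by rewrite sqr_sqrtr // Qv_ge0. Qed.

Lemma QvC v : (Qv v)%:C%C = \sum_s (v s)^* * v s.
Proof.
by rewrite /Qv rmorph_sum; apply: eq_bigr => s _; rewrite /= nrm2C normCKC.

Qed.

Lemma Nv_ext u v : (forall s, u s = v s) -> Nv u = Nv v.
Proof. by move=> h; rewrite /Nv /Qv; congr Num.sqrt; apply: eq_bigr => s _; rewrite h. Qed.

Lemma Nv_le u v : (forall s, nrm2 (u s) <= nrm2 (v s)) -> Nv u <= Nv v.
Proof. by move=> h; apply: ler_wsqrtr; apply: ler_sum => s _. Qed.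

Lemma Nv_proj P v : Nv (proj P v) <= Nv v.
Proof. by apply: Nv_le => s; rewrite /proj; case: (P s); rewrite ?nrm2_0 ?nrm2_ge0. Qed.

Lemma Nv_opp v : Nv (fun s => - v s) = Nv v.
Proof. by rewrite /Nv /Qv; congr Num.sqrt; apply: eq_bigr => s _; rewrite nrm2N. Qed.

Lemma Nv0 : Nv (fun _ => 0) = 0.
Proof. by rewrite /Nv /Qv big1 ?sqrtr0 // => s _; rewrite nrm2_0. Qed.

Definition rv v (p : bool * S) : R := if p.1 then complex.Re (v p.2) else complex.Im (v p.2).

Lemma Qv_rv v : \sum_p rv v p ^+ 2 = Qv v.
Proof.
rewrite -(pair_big xpredT xpredT (fun b s => rv v (b, s) ^+ 2)) /= big_bool /=.
by rewrite -big_split.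
Qed.

Lemma Nv_L2 v : Nv v = L2 (rv v).
Proof. by rewrite /L2 Qv_rv. Qed.

Lemma Nv_triangle u v : Nv (fun s => u s + v s) <= Nv u + Nv v.
Proof.
rewrite !Nv_L2.
have -> : L2 (rv (fun s => u s + v s)) = L2 (fun p => rv u p + rv v p).
  rewrite /L2; congr Num.sqrt; apply: eq_bigr => -[b s] _; rewrite /rv /=.
  by case: (u s) => a1 b1; case: (v s) => a2 b2; case: b.
exact: minkowski.
Qed.

Lemma Nv_triangleB u v w : Nv (fun s => u s - w s) <= Nv (fun s => u s - v s) + Nv (fun s => v s - w s).
Proof.
rewrite (Nv_ext (v := fun s => (u s - v s) + (v s - w s))); first exact: Nv_triangle.
by move=> s; rewrite addrA subrK.
Qed.

Lemma Nv_sub u v : Nv (fun s => u s - v s) <= Nv u + Nv v.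
Proof. by apply: (le_trans (Nv_triangle u (fun s => - v s))); rewrite Nv_opp. Qed.

Lemma Nv_reindex (h : S -> S) v : injective h -> Nv (fun s => v (h s)) = Nv v.
Proof. by move=> hi; rewrite /Nv /Qv [in RHS](reindex_inj hi). Qed.

Lemma Nv_apply_op (U : S -> S -> R[i]) v : op_unitary U -> Nv (apply_op U v) = Nv v.
Proof.
move=> hU; rewrite /Nv; congr Num.sqrt; apply: complexI; rewrite !QvC /apply_op.
transitivity (\sum_s \sum_t \sum_t' ((v t)^* * v t') * ((U s t)^* * U s t')).
  apply: eq_bigr => s _; rewrite rmorph_sum big_distrl; apply: eq_bigr => t _.
  rewrite big_distrr; apply: eq_bigr => t' _; rewrite rmorphM /=; ring.
rewrite exchange_big; apply: eq_bigr => t _; rewrite exchange_big /=.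
under eq_bigr do rewrite -mulr_sumr hU.
rewrite (bigD1 t) //= eqxx mulr1 big1 ?addr0 // => t' /negbTE.
by rewrite eq_sym => ->; rewrite mulr0.
Qed.

Lemma Nv_sum_disj (Z : finType) (P : Z -> pred S) v :
  (forall z z' s, P z s -> P z' s -> z = z') ->
  \sum_z Nv (proj (P z) v) <= Num.sqrt (#|Z|%:R) * Nv v.
Proof.
move=> hd; apply: (le_trans (sum_sqrt_le (fun z => Qv_ge0 (proj (P z) v)))).

rewrite ler_wpM2l ?sqrtr_ge0 // ler_wsqrtr //.
rewrite /Qv exchange_big; apply: ler_sum => s _ /=.
case: (pickP (fun z => P z s)) => [z0 hz0|hn].
  rewrite (bigD1 z0) //= /proj hz0 big1 ?addr0 // => z hz.
  case: ifP => hp; last by rewrite nrm2_0.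
  by move: hz; rewrite (hd _ _ _ hp hz0) eqxx.
by rewrite big1 ?nrm2_ge0 // => z _; rewrite /proj hn nrm2_0.
Qed.

End Cvec.

Section Hybrid.
Variable R : realType.
Variable n : nat.
Variable W : finType.
Local Notation S := (qspace n W).

Definition fq (phi : {perm bits n}) (b : bool) : bits n -> bits n :=
  if b then (phi : bits n -> bits n) else (phi^-1)%g.

Lemma bxorK (a b : bits n) : bxor (bxor a b) b = a.
Proof. by apply/ffunP => i; rewrite !ffunE addbK. Qed.

Definition osig (f : bits n -> bits n) (s : S) : S := (s.1.1, bxor s.1.2 (f s.1.1), s.2).

Lemma osigK f : involutive (osig f).
Proof. by case=> [[a b] w]; rewrite /osig /= bxorK. Qed.

Lemma Nv_oracle f (v : S -> R[i]) : Nv (oracle f v) = Nv v.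
Proof. exact: (Nv_reindex v (inv_inj (osigK f))). Qed.

Lemma oracle_diff f g (D : pred (bits n)) (v : S -> R[i]) :
  (forall a, f a != g a -> D a) ->
  Nv (fun s => oracle f v s - oracle g v s) <= 2 * Nv (proj (fun s : S => D s.1.1) v).
Proof.
move=> hD.
rewrite (Nv_ext (v := fun s => oracle f (proj (fun s : S => D s.1.1) v) s
                              - oracle g (proj (fun s : S => D s.1.1) v) s)).
  apply: (le_trans (Nv_sub _ _)); rewrite !Nv_oracle mulr2n mulrDl mul1r //.
move=> s; rewrite /oracle /proj /=.
case: (boolP (D s.1.1)) => h //.
have e : f s.1.1 = g s.1.1.
  by apply/eqP; apply: contraNT h; apply: hD.
by rewrite e !subrr.
Qed.

Lemma hybrid (s0 : S) (U : nat -> S -> S -> R[i]) (dir : nat -> bool) (T : nat)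
  (phi phi0 : {perm bits n}) (D : nat -> pred (bits n)) :
  (forall j, (j <= T)%N -> op_unitary (U j)) ->
  (forall j a, fq phi (dir j) a != fq phi0 (dir j) a -> D j a) ->
  forall k, (k <= T)%N ->
  Nv (fun s => qstate phi s0 U dir k s - qstate phi0 s0 U dir k s)
     <= 2 * \sum_(j < k) Nv (proj (fun s : S => D j s.1.1) (qstate phi0 s0 U dir j)).
Proof.
move=> hU hD; elim=> [|k IH] hk.
  by rewrite (Nv_ext (v := fun _ => 0)) ?Nv0 ?big_ord0 ?mulr0 // => s; rewrite subrr.
set x := qstate phi s0 U dir k; set y := qstate phi0 s0 U dir k.
set f := fq phi (dir k); set g := fq phi0 (dir k).
rewrite (Nv_ext (v := apply_op (U k.+1) (fun s => oracle f x s - oracle g y s))); last first.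
  by move=> s; rewrite /= /apply_op -sumrB; apply: eq_bigr => t _; rewrite mulrBr.
rewrite Nv_apply_op; last exact: hU.
apply: (le_trans (Nv_triangleB _ (oracle f y) _)).
have h1 : Nv (fun s => oracle f x s - oracle f y s) <= 2 * \sum_(j < k)
      Nv (proj (fun s : S => D j s.1.1) (qstate phi0 s0 U dir j)).
  rewrite (Nv_ext (v := oracle f (fun s => x s - y s))) // Nv_oracle.
  exact: IH (ltnW hk).
have h2 := oracle_diff y (hD k).
rewrite big_ord_recr /= mulrDr.
apply: lerD; [exact: h1 | exact: h2].
Qed.

Lemma Nv_basis (s0 : S) : Nv (basis_vec R s0) = 1.
Proof.
rewrite /Nv /Qv (bigD1 s0) //= big1 ?addr0 /basis_vec ?eqxx ?nrm2_1 ?sqrtr1 //.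
by move=> s /negbTE ->; rewrite nrm2_0.
Qed.

Lemma Nv_qstate (s0 : S) (U : nat -> S -> S -> R[i]) (dir : nat -> bool) (T : nat)
  (phi : {perm bits n}) :
  (forall j, (j <= T)%N -> op_unitary (U j)) ->
  forall k, (k <= T)%N -> Nv (qstate phi s0 U dir k) = 1.
Proof.
move=> hU; elim=> [|k IH] hk /=.
  by rewrite Nv_apply_op ?Nv_basis //; apply: hU.
by rewrite Nv_apply_op ?Nv_oracle ?IH ?(ltnW hk) //; apply: hU.
Qed.

End Hybrid.

Section Abstract.
Variable R : realType.
Variable n : nat.
Variable W : finType.
Local Notation S := (qspace n W).

Lemma abstract_bound (s0 : S) (U : nat -> S -> S -> R[i]) (dir : nat -> bool) (T : nat)
  (Z : finType) (phis : Z -> {perm bits n}) (phi0 : {perm bits n})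
  (G : Z -> pred S) (D : Z -> nat -> pred (bits n)) (e : R) :
  (forall j, (j <= T)%N -> op_unitary (U j)) ->
  (forall z j a, fq (phis z) (dir j) a != fq phi0 (dir j) a -> D z j a) ->
  (forall j z z' a, D z j a -> D z' j a -> z = z') ->
  (forall z z' s, G z s -> G z' s -> z = z') ->
  0 <= e ->
  (forall z, e <= Qv (proj (G z) (qstate (phis z) s0 U dir T))) ->
  #|Z|%:R * e <= (1 + 2 * T%:R) ^+ 2.
Proof.
move=> hU hD hDd hGd e0 he.
pose psi0 j := qstate phi0 s0 U dir j.
have hz : forall z, Num.sqrt e <= Nv (proj (G z) (psi0 T)) +
    2 * \sum_(j < T) Nv (proj (fun s : S => D z j s.1.1) (psi0 j)).
  move=> z.
  apply: (le_trans (ler_wsqrtr (he z))).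
  rewrite -/(Nv _).
  set pz := qstate (phis z) s0 U dir T.
  rewrite (Nv_ext (v := fun s => proj (G z) (psi0 T) s +
                (proj (G z) pz s - proj (G z) (psi0 T) s))); last first.
    by move=> s; rewrite addrC subrK.
  apply: (le_trans (Nv_triangle _ _)); rewrite lerD2l.
  rewrite (Nv_ext (v := proj (G z) (fun s => pz s - psi0 T s))); last first.
    by move=> s; rewrite /proj; case: (G z s); rewrite ?subrr.
  apply: (le_trans (Nv_proj _ _)).
  have HH := (hybrid s0 hU (hD z) (leqnn T)). exact: HH.
have hsum : \sum_(z : Z) Num.sqrt e <= \sum_(z : Z) (Nv (proj (G z) (psi0 T)) +
    2 * \sum_(j < T) Nv (proj (fun s : S => D z j s.1.1) (psi0 j))).
  by apply: ler_sum => z _; exact: hz.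
rewrite sumr_const big_split /= -mulr_sumr exchange_big /= in hsum.
have h1 := Nv_sum_disj (psi0 T) hGd.
have h2 : forall j : 'I_T, \sum_z Nv (proj (fun s : S => D z j s.1.1) (psi0 j))
            <= Num.sqrt #|Z|%:R.
  move=> j; apply: le_trans (Nv_sum_disj (psi0 j) _) _.
    by move=> z z' s; apply: hDd.
  by rewrite (Nv_qstate _ _ _ hU) ?mulr1 // ltnW.
rewrite (Nv_qstate _ _ _ hU) // mulr1 in h1.
have h3 : \sum_(j < T) \sum_z Nv (proj (fun s : S => D z j s.1.1) (psi0 j))
     <= \sum_(j < T) Num.sqrt #|Z|%:R by apply: ler_sum => j _; exact: h2.
rewrite sumr_const card_ord in h3.
set a := Num.sqrt #|Z|%:R in h1 h3.
have a0 : 0 <= a by apply: sqrtr_ge0.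
have aa : a ^+ 2 = #|Z|%:R by rewrite sqr_sqrtr ?ler0n.
set se := Num.sqrt e in hsum.
have se0 : 0 <= se by apply: sqrtr_ge0.
have ss : se ^+ 2 = e by rewrite sqr_sqrtr.
rewrite -aa -ss.
have key : a ^+ 2 * se <= a * (1 + 2 * T%:R).
  have eZ : #|(xpredT : pred Z)| = #|Z| by apply: eq_card.
  rewrite eZ in hsum.
  rewrite -[a *+ T]mulr_natr in h3.
  rewrite -[se *+ _]mulr_natl -aa in hsum.
  apply: (le_trans hsum); nra.
have [->|apos] := eqVneq a 0; first by rewrite expr0n /= mul0r sqr_ge0.
have ap : 0 < a by rewrite lt_def apos a0.
have k2 : a * se <= 1 + 2 * T%:R.
  by rewrite -(ler_pM2l ap) mulrA -expr2.
have hT : 0 <= a * se by apply: mulr_ge0.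
have e2 : a ^+ 2 * se ^+ 2 = (a * se) ^+ 2 by rewrite exprMn.
rewrite e2; nra.
Qed.

End Abstract.

Section Comb.
Variables r c : nat.
Hypotheses (hr : (0 < r)%N) (hc : (0 < c)%N).
Local Notation n := (r + c)%N.
Local Notation m := (minn r c).

Lemma n_gt0 : (0 < n)%N. Proof. by rewrite addn_gt0 hr. Qed.

Definition e0 : bits n := [ffun i : 'I_n => (val i == 0)%N].
Definition embX (w : bits m) : bits n :=
  [ffun i : 'I_n => [exists j : 'I_m, ((r - m + j)%N == i) && w j]].
Definition embY (w : bits m) : bits n :=
  [ffun i : 'I_n => [exists j : 'I_m, ((n - m + j)%N == i) && w j]].
Definition rotp (i : 'I_n) : 'I_n := Ordinal (ltn_pmod (i + r) n_gt0).
Definition rot (x : bits n) : bits n := [ffun i => x (rotp i)].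
Definition phi0f (x : bits n) : bits n := bxor (rot x) e0.

Lemma m_le_r : (m <= r)%N. Proof. exact: geq_minl. Qed.
Lemma m_le_c : (m <= c)%N. Proof. exact: geq_minr. Qed.

Lemma rotp_surj (p : 'I_n) : exists i, rotp i = p.
Proof.
have hp : ((p + c) %% n < n)%N by apply: ltn_pmod n_gt0.
exists (Ordinal hp); apply: val_inj => /=.
rewrite modnDml -addnA [(c + r)%N]addnC modnDr modn_small //.
Qed.

Lemma rot_inj : injective rot.
Proof.
move=> x y h; apply/ffunP => p; have [i <-] := rotp_surj p.
by move/ffunP: h => /(_ i); rewrite !ffunE.
Qed.

Lemma bxor_inj (b : bits n) : injective (fun x => bxor x b).
Proof. exact: (can_inj (g := fun x => bxor x b) (fun x => bxorK x b)). Qed.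

Lemma phi0_inj : injective phi0f.
Proof. by move=> x y /bxor_inj /rot_inj. Qed.

Definition phi0 : {perm bits n} := perm phi0_inj.

Lemma rot_embX w : rot (embX w) = embY w.
Proof.
apply/ffunP => i; rewrite !ffunE /=; apply: eq_existsb => j; congr andb.
have hi := ltn_ord i; have hj := ltn_ord j.
have mr := m_le_r; have mc := m_le_c.
case: (ltnP (i + r) n) => hir.
  rewrite modn_small //.
  apply/eqP/eqP => /= h; lia.
have -> : (i + r = (i + r - n) + n)%N by lia.
rewrite modnDr modn_small; last by lia.
apply/eqP/eqP => /= h; lia.
Qed.


Definition i0 : 'I_n := Ordinal n_gt0.

Lemma embY_at w (j : 'I_m) (h : (n - m + j < n)%N) : embY w (Ordinal h) = w j.
Proof.
rewrite ffunE; apply/existsP/idP => [[j' /andP [/eqP e wj']]|wj].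
  by have -> : j = j' by apply: val_inj => /=; move: e => /=; lia.
by exists j; rewrite eqxx.
Qed.

Lemma embX_at w (j : 'I_m) (h : (r - m + j < n)%N) : embX w (Ordinal h) = w j.
Proof.
rewrite ffunE; apply/existsP/idP => [[j' /andP [/eqP e wj']]|wj].
  have mr := m_le_r.
  by have -> : j = j' by apply: val_inj => /=; move: e => /=; lia.
by exists j; rewrite eqxx.
Qed.

Lemma embY_inj : injective embY.
Proof.
move=> w w' e; apply/ffunP => j.
have h : (n - m + j < n)%N by have := ltn_ord j; have := m_le_r; lia.
by rewrite -(embY_at w h) -(embY_at w' h) e.
Qed.

Lemma embX_inj : injective embX.
Proof.
move=> w w' e; apply/ffunP => j.
have h : (r - m + j < n)%N by have := ltn_ord j; have := m_le_r; lia.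
by rewrite -(embX_at w h) -(embX_at w' h) e.
Qed.

Lemma embY_0 w : embY w i0 = false.
Proof.
rewrite ffunE; apply/existsP => -[j /andP [/eqP e _]].
by move: e => /=; have := m_le_r; lia.
Qed.

Lemma e0_0 : e0 i0 = true.
Proof. by rewrite ffunE. Qed.

Lemma bxor_at (x y : bits n) i : bxor x y i = x i (+) y i.
Proof. by rewrite ffunE. Qed.

Lemma inX1_embX w : @inX1 r c (embX w).
Proof.
apply/forallP => i; apply/implyP => hi; rewrite ffunE.
apply/existsP => -[j /andP [/eqP e _]].
by move: e hi; have := ltn_ord j; have := m_le_r; lia.
Qed.

Lemma inX2_embY w : @inX2 r c (embY w).
Proof.
apply/forallP => i; apply/implyP => hi; rewrite ffunE.
apply/existsP => -[j /andP [/eqP e _]].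
by move: e hi; have := ltn_ord j; have := m_le_c; lia.
Qed.

Lemma inX2_0 y : @inX2 r c y -> y i0 = false.
Proof. by move/forallP => /(_ i0) /implyP /(_ hr) /negbTE. Qed.

Lemma phi0_0 x : @inX1 r c x -> phi0 x i0 = true.
Proof.
move/forallP => hx; rewrite permE /phi0f bxor_at e0_0 ffunE.
have hv : val (rotp i0) = r by rewrite /= add0n modn_small // -{1}[r]addn0 ltn_add2l.
have := hx (rotp i0); rewrite hv leqnn /= => /negbTE ->.
by [].
Qed.


Lemma phi0_embX w : phi0 (embX w) = bxor (embY w) e0.
Proof. by rewrite permE /phi0f rot_embX. Qed.

Variable K : nat.
Hypotheses (hK1 : (0 < K)%N) (hKm : (K <= 2 ^ m)%N).

Lemma card_bits : #|bits m| = (2 ^ m)%N.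
Proof. by rewrite card_ffun card_bool card_ord. Qed.

Local Notation N := (2 ^ m %/ K)%N.

Lemma blk_lt (z : 'I_N) (k : 'I_K) : (z * K + k < #|bits m|)%N.
Proof.
rewrite card_bits.
have h1 : (N * K <= 2 ^ m)%N by apply: leq_divM.
have h2 : (z.+1 * K <= N * K)%N by rewrite leq_mul2r ltn_ord orbT.
have h3 := ltn_ord k.
rewrite mulSn in h2; lia.
Qed.

Definition blk (z : 'I_N) (k : 'I_K) : 'I_#|bits m| := Ordinal (blk_lt z k).
Definition wv (z : 'I_N) (k : 'I_K) : bits m := enum_val (blk z k).

Lemma wv_inj z k z' k' : wv z k = wv z' k' -> z = z' /\ k = k'.
Proof.
move=> /enum_val_inj /(congr1 val) /= e.
have hk := ltn_ord k; have hk' := ltn_ord k'.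
have ez : ((z * K + k) %/ K)%N = z by rewrite divnMDl // (divn_small hk) addn0.
have ez' : ((z' * K + k') %/ K)%N = z' by rewrite divnMDl // (divn_small hk') addn0.
have ek : ((z * K + k) %% K)%N = k by rewrite modnMDl modn_small //.
have ek' : ((z' * K + k') %% K)%N = k' by rewrite modnMDl modn_small //.
split; apply: val_inj => /=.
  by rewrite -ez -ez' e.
by rewrite -ek -ek' e.
Qed.

Definition Pairs (z : 'I_N) (u : bits n) : bool :=
  [exists k : 'I_K, (u == embY (wv z k)) || (u == bxor (embY (wv z k)) e0)].

Lemma bxor_eq (u y : bits n) : (bxor u e0 == y) = (u == bxor y e0).
Proof.
apply/eqP/eqP => [<-|->]; by rewrite bxorK.
Qed.

Lemma PairsX z u : Pairs z (bxor u e0) = Pairs z u.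
Proof.
apply: eq_existsb => k; rewrite !bxor_eq bxorK orbC.
by congr orb; apply/eqP/eqP => [/bxor_inj|->].
Qed.

Definition tauf z (u : bits n) : bits n := if Pairs z u then bxor u e0 else u.

Lemma tauK z : involutive (tauf z).
Proof.
move=> u; rewrite /tauf; case h: (Pairs z u).
  by rewrite PairsX h bxorK.
by rewrite h.
Qed.

Definition tau z : {perm bits n} := perm (inv_inj (tauK z)).
Definition phis z : {perm bits n} := (phi0 * tau z)%g.

Lemma phisE z x : phis z x = tauf z (phi0 x).
Proof. by rewrite permM permE. Qed.

Lemma Xset z : [set x | @inX1 r c x && @inX2 r c (phis z x)] = [set embX (wv z k) | k in 'I_K].
Proof.
apply/setP => x; rewrite inE; apply/andP/imsetP => [[h1 h2]|[k _ ->]].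
  move: h2; rewrite phisE /tauf; case: ifP => hP h2; last first.
    by move: (inX2_0 h2); rewrite phi0_0.
  case/existsP: hP => k /orP [/eqP e|/eqP e].
    by move: (phi0_0 h1); rewrite e embY_0.
  exists k => //; apply: phi0_inj.
  by move: e; rewrite -phi0_embX !permE.
split; first exact: inX1_embX.
rewrite phisE phi0_embX /tauf.
have -> : Pairs z (bxor (embY (wv z k)) e0).
  by apply/existsP; exists k; rewrite eqxx orbT.
by rewrite bxorK inX2_embY.
Qed.

Lemma num_Xpairs_phis z : num_Xpairs (phis z) = K.
Proof.
rewrite /num_Xpairs Xset card_imset ?card_ord //.
by move=> k k' /embX_inj /wv_inj [].
Qed.

Lemma Xpair_phis z p : Xpair (phis z) p -> exists k, p.1 = embX (wv z k).
Proof.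
case/and3P => h1 h2 /eqP e.
have : p.1 \in [set x | @inX1 r c x && @inX2 r c (phis z x)] by rewrite inE h1 e h2.
by rewrite Xset => /imsetP [k _ ->]; exists k.
Qed.

Lemma Xpair_disj z z' p : Xpair (phis z) p -> Xpair (phis z') p -> z = z'.
Proof.
move=> /Xpair_phis [k ek] /Xpair_phis [k' ek'].
by move: ek'; rewrite ek => /embX_inj /wv_inj [].
Qed.

Lemma Pairs_disj z z' u : Pairs z u -> Pairs z' u -> z = z'.
Proof.
case/existsP => k /orP [] /eqP -> /existsP [k' /orP [] /eqP e].
- by case: (wv_inj (embY_inj e)).
- by move: (congr1 (fun x : bits n => x i0) e); rewrite bxor_at embY_0 embY_0 e0_0.
- by move: (congr1 (fun x : bits n => x i0) e); rewrite bxor_at embY_0 embY_0 e0_0.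
- by case: (wv_inj (embY_inj (bxor_inj e))).
Qed.

Definition Dd (b : bool) z (a : bits n) : bool := if b then Pairs z (phi0 a) else Pairs z a.

Lemma fq_diff z b a : fq (phis z) b a != fq phi0 b a -> Dd b z a.
Proof.
apply: contraNT; rewrite /Dd /fq; case: b => hn /=.
  by rewrite phisE /tauf (negbTE hn).
have ht : tau z a = a by rewrite permE /tauf (negbTE hn).
have hti : ((tau z)^-1)%g a = a by rewrite -{1}ht permK.
by rewrite /phis invMg permM hti.
Qed.

End Comb.

Lemma success_eq (R : realType) r c (W : finType) (phi : {perm bits (r + c)})
  (s0 : qspace (r + c) W) (U : nat -> qspace (r + c) W -> qspace (r + c) W -> R[i])
  (dir : nat -> bool) (out : qspace (r + c) W -> bits (r + c) * bits (r + c)) (T : nat) :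
  success_prob phi s0 U dir out T =
  (Qv (proj (fun s => Xpair phi (out s)) (qstate phi s0 U dir T)))%:C%C.
Proof.
rewrite /success_prob /Qv rmorph_sum big_mkcond /=; apply: eq_bigr => s _.
by rewrite /proj; case: ifP => _; [rewrite nrm2C | rewrite nrm2_0].
Qed.

Unset Implicit Arguments.
Set Strict Implicit.

Theorem lemma4 (R : realType) (r c K T : nat) (eps : R[i])
  (W : finType) (s0 : qspace (r + c) W)
  (U : nat -> qspace (r + c) W -> qspace (r + c) W -> R[i])
  (dir : nat -> bool) (out : qspace (r + c) W -> bits (r + c) * bits (r + c)) :
  (1 <= r)%N -> (1 <= c)%N ->
  (1 <= K)%N -> (K <= 2 ^ minn r c)%N ->
  (forall j, (j <= T)%N -> op_unitary (U j)) ->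
  0 < eps ->
  (forall phi : {perm bits (r + c)}, num_Xpairs phi = K ->
     eps <= success_prob phi s0 U dir out T) ->
  eps <= (8 * (T + 1) ^ 2 * K)%:R / (2 ^ minn r c)%:R.
Proof.
move=> hr hc hK1 hKm hU.
case: eps => a b; rewrite ltcE /= => /andP [/eqP b0 a0]; subst b.
move=> hphi.
pose N := (2 ^ minn r c %/ K)%N.
have hb := @abstract_bound R (r + c) W s0 U dir T 'I_N (phis hr hc hK1 hKm)
  (phi0 c hr) (fun z s => Xpair (phis hr hc hK1 hKm z) (out s))
  (fun z j => Dd hr hc hK1 hKm (dir j) z) a.
have := hb hU.
have H1 : forall z j a0, fq (phis hr hc hK1 hKm z) (dir j) a0 != fq (phi0 c hr) (dir j) a0 ->
   Dd hr hc hK1 hKm (dir j) z a0 by move=> z j a1; apply: fq_diff.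
have H2 : forall j z z' a0, Dd hr hc hK1 hKm (dir j) z a0 -> Dd hr hc hK1 hKm (dir j) z' a0 -> z = z'.
  by move=> j z z' a1; rewrite /Dd; case: (dir j); apply: Pairs_disj.
have H3 : forall z z' s, Xpair (phis hr hc hK1 hKm z) (out s) ->
    Xpair (phis hr hc hK1 hKm z') (out s) -> z = z'.
  by move=> z z' s; apply: Xpair_disj.
have H4 : forall z : 'I_N, a <= Qv (proj (fun s => Xpair (phis hr hc hK1 hKm z) (out s))
                 (qstate (phis hr hc hK1 hKm z) s0 U dir T)).
  move=> z; have := hphi _ (num_Xpairs_phis hr hc hK1 hKm z).
  by rewrite success_eq -complexr0 lecR.
move=> /(_ H1 H2 H3 (ltW a0) H4); rewrite card_ord => hmain.
have -> : ((8 * (T + 1) ^ 2 * K)%:R / (2 ^ minn r c)%:R : R[i]) =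
   (((8 * (T + 1) ^ 2 * K)%:R / (2 ^ minn r c)%:R : R))%:C%C.
  by rewrite fmorph_div !rmorph_nat.
rewrite -complexr0 lecR.
have hM0 : (0 < 2 ^ minn r c)%N by rewrite expn_gt0.
rewrite ler_pdivlMr ?ltr0n //.
have hN1 : (0 < N)%N by rewrite divn_gt0.
have hKN : (N * K <= 2 ^ minn r c)%N by apply: leq_divM.
have hKN2 : (2 ^ minn r c < N * K + K)%N.
  by rewrite {1}(divn_eq (2 ^ minn r c) K) ltn_add2l ltn_pmod.
have hnat : ((1 + 2 * T) ^ 2 * 2 ^ minn r c <= 8 * (T + 1) ^ 2 * K * N)%N.
  move: hKN hKN2 hN1; set M := (2 ^ minn r c)%N => hKN hKN2 hN1.
  have e1 : (M <= 2 * (N * K))%N by nia.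
  have e2 : ((1 + 2 * T) ^ 2 <= 4 * (T + 1) ^ 2)%N by rewrite !expnS !expn0; nia.
  have := leq_mul e2 e1.
  have -> : (4 * (T + 1) ^ 2 * (2 * (N * K)) = 8 * (T + 1) ^ 2 * K * N)%N by ring.
  by [].
have hnatR : (((1 + 2 * T) ^ 2 * 2 ^ minn r c)%N%:R : R) <= (8 * (T + 1) ^ 2 * K * N)%N%:R.
  by rewrite ler_nat.
move: hnatR; rewrite !natrM !natrX !natrD ?natrM => hnat2.
have hN : (0 : R) < N%:R by rewrite ltr0n.
have hM : (0 : R) < 2 ^+ minn r c by rewrite exprn_gt0.
move: hnat2 hmain hN hM.
set y := 2 ^+ minn r c; set nn := N%:R; set t := T%:R; set k := K%:R.
move=> hnat3 hmain hN hM.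
nra.
Qed.
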